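(* Every signed $Z_4$-colourable graph is $\{1,1,2\}$-choosable.
   Context: A signed graph is a pair $(G,\sigma)$ with $\sigma:E(G)\to\{-1,+1\}$. A $Z_4$-colouring of $(G,\sigma)$ is a map $f:V(G)\to\mathbb Z_4$ such that $f(x)\ne\sigma(e)f(y)$ in $\mathbb Z_4$ for every edge $e=xy$. $G$ is signed $Z_4$-colourable if $(G,\sigma)$ has a $Z_4$-colouring for every signature $\sigma$. For a partition $\lambda=\{k_1,\dots,k_q\}$ of $k$, a $\lambda$-assignment of $G$ is an assignment $L$ with $|L(v)|=k$ for all $v$ such that $\bigcup_vL(v)$ can be partitioned into sets $C_1,\dots,C_q$ with $|L(v)\cap C_i|=k_i$ for all $v$ and $i$; $G$ is $\lambda$-choosable if for every $\lambda$-assignment $L$ there is a proper colouring $f$ with $f(v)\in L(v)$ for all $v$. *)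

(* Defs.v *)
From HB Require Import structures.
From mathcomp Require Import all_boot all_order all_algebra.
Set Implicit Arguments. Unset Strict Implicit. Unset Printing Implicit Defensive.
Import GRing.Theory.

(* A signature: sigma x y = true means the edge xy is negative (sign -1),
   false means positive (+1).  It must be symmetric so that each edge
   gets a single sign. *)
Definition signature (T : finType) (sigma : rel T) : Prop := symmetric sigma.

Definition Z4_colouring (T : finType) (e sigma : rel T) (f : T -> 'Z_4) : Prop :=
  forall x y, e x y -> f x != (if sigma x y then - f y else f y)%R.

Definition signed_Z4_colourable (T : finType) (e : rel T) : Prop :=
  forall sigma : rel T, signature sigma -> exists f : T -> 'Z_4, Z4_colouring e sigma f.

Definition lambda_assignment (T C : finType) (lambda : seq nat) (L : T -> {set C}) : Prop :=
  (forall v, #|L v| = sumn lambda) /\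
  exists P : 'I_(size lambda) -> {set C},
    [/\ (forall i j, i != j -> [disjoint P i & P j]),
        \bigcup_i P i = \bigcup_v L v &
        forall v i, #|L v :&: P i| = nth 0 lambda i].

Definition choosable (T : finType) (e : rel T) (lambda : seq nat) : Prop :=
  forall (C : finType) (L : T -> {set C}), lambda_assignment lambda L ->
    exists f : T -> C, (forall v, f v \in L v) /\ (forall x y, e x y -> f x != f y).

(* Main.v *)
Require Import Defs.
From mathcomp Require Import all_boot all_order all_algebra.
Import GRing.Theory.

Lemma two_sets_eq (C : finType) (A B : {set C}) c d :
  #|A| = 2 -> #|B| = 2 -> c != d -> c \in A -> d \in A -> c \in B -> d \in B -> A = B.
Proof.
move=> hA hB ncd cA dA cB dB.
have sA : [set c; d] \subset A by apply/subsetP=> z; rewrite !inE => /orP[]/eqP->.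
have sB : [set c; d] \subset B by apply/subsetP=> z; rewrite !inE => /orP[]/eqP->.
have c2 : #|[set c; d]| = 2 by rewrite cards2 ncd.
have eA : [set c; d] = A by apply/eqP; rewrite eqEcard sA hA c2.
have eB : [set c; d] = B by apply/eqP; rewrite eqEcard sB hB c2.
by rewrite -eA -eB.
Qed.

Theorem theorem12 (T : finType) (e : rel T) :
  symmetric e -> irreflexive e ->
  signed_Z4_colourable e -> choosable e [:: 1; 1; 2].
Proof.
move=> _ _ hZ C L [hcard [P [hdisj hcov hsz]]].
pose i0 : 'I_3 := @Ordinal 3 0 isT.
pose i1 : 'I_3 := @Ordinal 3 1 isT.
pose i2 : 'I_3 := @Ordinal 3 2 isT.
pose S v := L v :&: P i2.
have hS : forall v, #|S v| = 2 by move=> v; rewrite (hsz v i2).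
pose low v c := Some c == [pick d in S v].
pose cd v c : 'Z_4 := if c \in P i0 then 0%R else if c \in P i1 then 2%R
                      else if low v c then 1%R else 3%R.
pose sigma : rel T := fun x y => [exists c, [&& c \in S x, c \in S y & low x c != low y c]].
have ssym : signature sigma.
  move=> x y; apply/existsP/existsP => -[c /and3P[a b h]]; exists c;
  by rewrite a b eq_sym h.
have [f hf] := hZ sigma ssym.
have disj01 : forall i j c, i != j -> c \in P i -> c \in P j -> False.
  move=> i j c ij ci cj; move: (hdisj i j ij); rewrite disjoint_subset => /subsetP/(_ c ci).
  by rewrite inE cj.
have inP : forall v c, c \in L v -> exists i, c \in P i.
  move=> v c cL; have : c \in \bigcup_v L v by apply/bigcupP; exists v.
  by rewrite -hcov => /bigcupP[i _ ci]; exists i.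
have surj : forall v, exists c, c \in L v /\ cd v c = f v.
  move=> v.
  have [a ha] : exists a, L v :&: P i0 = [set a] by apply/cards1P; rewrite (hsz v i0).
  have [b hb] : exists b, L v :&: P i1 = [set b] by apply/cards1P; rewrite (hsz v i1).
  have [c [d [ncd hcd]]] : exists c d, c != d /\ S v = [set c; d].
    by apply/cards2P; rewrite hS.
  have aL : a \in L v :&: P i0 by rewrite ha set11.
  have bL : b \in L v :&: P i1 by rewrite hb set11.
  have cS : c \in S v by rewrite hcd !inE eqxx.
  have dS : d \in S v by rewrite hcd !inE eqxx orbT.
  have nP0 : forall z, z \in S v -> (z \in P i0) = false.
    move=> z; rewrite inE => /andP[_ z2]; apply/negP => z0; exact: (disj01 i0 i2 z).
  have nP1 : forall z, z \in S v -> (z \in P i1) = false.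
    move=> z; rewrite inE => /andP[_ z2]; apply/negP => z0; exact: (disj01 i1 i2 z).
  have bnP0 : (b \in P i0) = false.
    apply/negP => z0; move: bL; rewrite inE => /andP[_ b1]; exact: (disj01 i0 i1 b).
  have [l [lS ll]] : exists l, l \in S v /\ low v l.
    rewrite /low; case: (pickP (mem (S v))) => [z zS | h]; first by exists z.
    by move: (h c); rewrite /= cS.
  have [h [hS' hl]] : exists h, h \in S v /\ ~~ low v h.
    case: (eqVneq l c) => [lc | lc].
      exists d; split=> //; move: ll; rewrite /low lc => /eqP <-.
      by apply/negP => /eqP [] /eqP; rewrite eq_sym (negbTE ncd).
    exists c; split=> //; move: ll; rewrite /low => /eqP <-.
    by apply/negP => /eqP [] /eqP; rewrite eq_sym (negbTE lc).
  have cases4 : forall z : 'Z_4, [\/ z = 0%R, z = 2%R, z = 1%R | z = 3%R].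
    by case=> [[|[|[|[|n]]]] hn] //=; [constructor 1|constructor 3|constructor 2|constructor 4]; apply: val_inj.
  have := cases4 (f v) => -[] ->.
  - exists a; move: aL; rewrite inE => /andP[aL a0]; by rewrite /cd aL a0.
  - exists b; move: bL; rewrite inE => /andP[bL' b1]; by rewrite /cd bL' b1 bnP0.
  - exists l; move: (lS); rewrite inE => /andP[lL _]; by rewrite lL; rewrite /cd nP0 // nP1 // ll.
  - exists h; move: (hS'); rewrite inE => /andP[hL _]; by rewrite hL; rewrite /cd nP0 // nP1 // (negbTE hl).
have [g hg] := fin_all_exists surj.
exists g; split; first by move=> v; case: (hg v).
move=> x y exy; apply/eqP => gxy.
have := hf x y exy; rewrite -(proj2 (hg x)) -(proj2 (hg y)) -gxy.
have cx : g x \in L x by case: (hg x).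
have cy : g x \in L y by rewrite gxy; case: (hg y).
set c := g x.
rewrite /cd; case: ifP => c0; first by rewrite oppr0 if_same eqxx.
case: ifP => c1; first by case: (sigma x y).
have c2 : c \in P i2.
  have [i ci] := inP x c cx.
  have : i = i0 \/ i = i1 \/ i = i2.
    by case: i ci => [[|[|[|n]]] hn] ci //=; [left|right;left|right;right]; apply: val_inj.
  by case=> [ei|[ei|ei]]; move: ci; rewrite ei ?c0 ?c1.
have cSx : c \in S x by rewrite inE cx c2.
have cSy : c \in S y by rewrite inE cy c2.
case hs: (sigma x y).
  case: (eqVneq (low x c) (low y c)) => hl.
    exfalso; move/existsP: hs => [d /and3P[dx dy dl]].
    have ncd : c != d by apply: contraNneq dl => <-; rewrite hl.
    have eS := @two_sets_eq _ _ _ c d (hS x) (hS y) ncd cSx dx cSy dy.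
    by move: dl; rewrite /low eS eqxx.
  by case: (low x c) (low y c) hl => [] [].
case: (eqVneq (low x c) (low y c)) => hl; first by rewrite hl eqxx.
exfalso; move: hs => /negbT/existsPn/(_ c); by rewrite cSx cSy hl.
Qed.
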